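(* For $C\in\mathbb D$, $$C^\beta=\{c\in\mathcal S: c\circ\bar K_C(z,\partial_z)=0\},$$ where $\bar K_C(z,\partial_z)$ is $\bar K_C$ with $x$ replaced by $z$ and $c\circ\bar K_C(z,\partial_z)$ is the distribution $u\mapsto c(\bar K_C(z,\partial_z)u)$.
   Context: Fix an integer $r>1$ and constants $a_1,\dots,a_{r-2}\in\mathbb C$, and let $L_0=\partial^r-a_{r-2}\partial^{r-2}-\cdots-a_1\partial-x$, where $\partial=d/dx$. Fix a basis $f_1,\dots,f_r$ of $\ker L_0$ normalized so that $|Wr(f_1,\dots,f_r)|=1$. For a function $f$ of one variable write $\hat f(x,z)=f(x+z)$. $\mathcal S$ denotes the space of finitely supported distributions in the $z$-plane: finite linear combinations of $\delta_\lambda\circ\partial_z^j$, where $\delta_\lambda$ evaluates its argument at $z=\lambda$; applied to a function of $(x,z)$ such a distribution acts in $z$ and yields a function of $x$. $\mathbb D$ is the set of finite-dimensional subspaces $C\subset\mathcal S$ having a basis $c_i=\delta_{\lambda_i}\circ(\partial_z+\gamma_i)$, $i=1,\dots,n$ ($n\ge1$), with $\lambda_i$ pairwise distinct and $\gamma_i\in\mathbb C$. For $C\in\mathbb D$ put $N=rn$, let $\phi_1,\dots,\phi_N$ be the functions $c_i(\hat f_j)$, and let $\bar K_C$ be the operator $u\mapsto\kappa\,|Wr(\phi_1,\dots,\phi_N,u)|$ with $\kappa$ the nonzero constant making the coefficient of $\partial^N$ a monic polynomial (it has polynomial coefficients); $Wr(v_1,\dots,v_m)$ is the matrix with first row $(v_1,\dots,v_m)$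 and each subsequent row the derivative of the previous. $\flat$ is the unique $\mathbb C$-linear anti-automorphism of the Weyl algebra $\mathbb C[x]\langle\partial\rangle$ with $x^\flat=L_0$, $\partial^\flat=\partial$ (equivalently $T(x,\partial_x)\hat f(x,z)=T^\flat(z,\partial_z)\hat f(x,z)$ for all $f\in\ker L_0$). $C^\beta:=\{c\in\mathcal S: c(\hat f)\in\ker\bar K_C^\flat\text{ for all }f\in\ker L_0\}$. *)

(* Defs.v *)
(* The complex plane is R[i] for an
   arbitrary R : realType, viewed as a numFieldType so that MathComp-Analysis
   derivatives (derive1 / derivable) are complex derivatives. *)
From mathcomp Require Import all_boot all_algebra.
From mathcomp Require Import complex.
From mathcomp Require Import all_classical all_reals all_analysis.
Import numFieldNormedType.Exports.
Import GRing.Theory Num.Theory.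
Set Implicit Arguments.
Unset Strict Implicit.
Unset Printing Implicit Defensive.
Local Open Scope ring_scope.

Definition Cx (R : realType) : numClosedFieldType := R[i].

Section Defs.
Variable R : realType.
Local Notation C := (Cx R).

Definition Dn (k : nat) (h : C -> C) : C -> C := derive1n k h.

Definition smooth (h : C -> C) : Prop := forall (k : nat) (x : C), derivable (Dn k h) x 1.

(* L_0 = d^r - a_{r-2} d^{r-2} - ... - a_1 d - x  (only a_1..a_{r-2} are used) *)
Definition L0 (r : nat) (a : nat -> C) (h : C -> C) : C -> C :=
  fun x => Dn r h x - \sum_(1 <= m < r.-1) a m * Dn m h x - x * h x.

Definition kerL0 (r : nat) (a : nat -> C) (h : C -> C) : Prop :=
  smooth h /\ forall x, L0 r a h x = 0.

Definition wr_mx (m : nat) (v : nat -> C -> C) (x : C) : 'M[C]_m :=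
  \matrix_(i < m, j < m) Dn i (v j) x.

Definition wr_mx_ext (N : nat) (v : nat -> C -> C) (u : C -> C) (x : C) : 'M[C]_N.+1 :=
  \matrix_(i < N.+1, j < N.+1) Dn i (if (j < N)%N then v j else u) x.

Definition hat (f : C -> C) : C -> C -> C := fun x z => f (x + z).

(* finitely supported distributions: (a, lambda, j) stands for
   a * delta_lambda o d_z^j; a distribution is a finite sum of these *)
Definition distr := seq (C * C * nat).

Definition dapp (c : distr) (g : C -> C) : C :=
  \sum_(t <- c) t.1.1 * Dn t.2 g t.1.2.

Definition dact (c : distr) (G : C -> C -> C) : C -> C := fun x => dapp c (G x).

(* c_i = delta_{lambda_i} o (d_z + gamma_i) *)
Definition cbasis (lam gam : nat -> C) (i : nat) : distr :=
  [:: (1, lam i, 1%N); (gam i, lam i, 0%N)].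

Definition phi (r : nat) (lam gam : nat -> C) (f : nat -> C -> C) (k : nat) : C -> C :=
  dact (cbasis lam gam (k %/ r)%N) (hat (f (k %% r)%N)).

Definition polyop (p : seq {poly C}) (u : C -> C) : C -> C :=
  fun x => \sum_(k < size p) (p`_k).[x] * Dn k u x.

(* action of T^flat for T = sum_k p_k(x) d^k, where flat is the anti-automorphism
   with x^flat = L_0, d^flat = d:  (p_k(x) d^k)^flat = d^k o p_k(L_0) *)
Definition flatop (r : nat) (a : nat -> C) (p : seq {poly C}) (g : C -> C) : C -> C :=
  fun x => \sum_(k < size p)
     Dn k (fun y => \sum_(j < size p`_k) (p`_k)`_j * iter j (L0 r a) g y) x.

Definition inCbeta (r : nat) (a : nat -> C) (p : seq {poly C}) (c : distr) : Prop :=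
  forall f : C -> C, kerL0 r a f -> forall x, flatop r a p (dact c (hat f)) x = 0.

End Defs.

(* Main.v *)
Require Import Defs.
From mathcomp Require Import all_boot all_algebra.
From mathcomp Require Import complex.
From mathcomp Require Import all_classical all_reals all_analysis.
From mathcomp Require Import ring.
Import numFieldNormedType.Exports.
Import GRing.Theory Num.Theory.
Local Open Scope ring_scope.
Set Implicit Arguments.
Unset Strict Implicit.
Section S.
Variable R : realType.
Local Notation C := (Cx R).

Lemma derive1_shift (g : C -> C) (y z : C) :
  derive1 (fun w => g (y + w)) z = derive1 g (y + z).
Proof.
rewrite /derive1; do 3 f_equal; apply/funext=> h /=; by rewrite addrCA.
Qed.
Lemma derivable_shift (g : C -> C) (y z : C) :
  derivable g (y + z) 1 -> derivable (fun w => g (y + w)) z 1.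
Proof.
rewrite /derivable.
have -> : (fun h : C => h^-1 *: ((g \o shift (y + z)) h%:A - g (y + z))) =
  (fun h : C => h^-1 *: (((fun w => g (y + w)) \o shift z) h%:A - g (y + z))).
  by apply/funext=> h /=; rewrite addrCA.
by [].
Qed.

Implicit Types F G : C -> C.
Lemma d1D F G x : derivable F x 1 -> derivable G x 1 ->
  derive1 (fun y => F y + G y) x = derive1 F x + derive1 G x.
Proof. move=> hF hG; rewrite !derive1E; exact: (deriveD hF hG). Qed.
Lemma dbD F G x : derivable F x 1 -> derivable G x 1 ->
  derivable (fun y => F y + G y) x 1.
Proof. move=> hF hG; exact: (derivableD hF hG). Qed.
Lemma d1B F G x : derivable F x 1 -> derivable G x 1 ->
  derive1 (fun y => F y - G y) x = derive1 F x - derive1 G x.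
Proof. move=> hF hG; rewrite !derive1E; exact: (deriveB hF hG). Qed.
Lemma dbB F G x : derivable F x 1 -> derivable G x 1 ->
  derivable (fun y => F y - G y) x 1.
Proof. move=> hF hG; exact: (derivableB hF hG). Qed.
Lemma d1M F G x : derivable F x 1 -> derivable G x 1 ->
  derive1 (fun y => F y * G y) x = F x * derive1 G x + G x * derive1 F x.
Proof. move=> hF hG; rewrite !derive1E. have := deriveM hF hG. move=> ->. by []. Qed.
Lemma dbM F G x : derivable F x 1 -> derivable G x 1 ->
  derivable (fun y => F y * G y) x 1.
Proof. move=> hF hG; have H := derivableM hF hG.
have e : (F * G) = (fun y => F y * G y) by apply/funext.
by rewrite -e. Qed.
Lemma d1Z (k : C) F x : derivable F x 1 ->
  derive1 (fun y => k * F y) x = k * derive1 F x.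
Proof. move=> hF; rewrite !derive1E; have := deriveMl k hF; move=> ->; by []. Qed.
Lemma dbZ (k : C) F x : derivable F x 1 ->
  derivable (fun y => k * F y) x 1.
Proof. move=> hF; have H := derivableM (derivable_cst k x 1) hF.
have e : (cst k * F) = (fun y => k * F y) by apply/funext.
by rewrite -e. Qed.
Lemma d1id x : derive1 (fun y : C => y) x = 1.
Proof. rewrite derive1E; exact: derive_id. Qed.
Lemma dbid x : derivable (fun y : C => y) x 1.
Proof. exact: derivable_id. Qed.
Lemma d1cst (k : C) x : derive1 (fun _ : C => k) x = 0.
Proof. exact: derive1_cst. Qed.
Lemma dbcst (k : C) x : derivable (fun _ : C => k) x 1.
Proof. exact: derivable_cst. Qed.

End S.

Section S.
Variable R : realType.
Local Notation C := (Cx R).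
Lemma d1sum (I : Type) (s : seq I) (F : I -> C -> C) x :
  (forall i, derivable (F i) x 1) ->
  derivable (fun y => \sum_(i <- s) F i y) x 1 /\
  derive1 (fun y => \sum_(i <- s) F i y) x = \sum_(i <- s) derive1 (F i) x.
Proof.
move=> hF; elim: s => [|t s [IH1 IH2]].
  have -> : (fun y => \sum_(i <- [::]) F i y) = (fun _ => 0).
    by apply/funext=> y; rewrite big_nil.
  by rewrite big_nil; split; [exact: dbcst| exact: d1cst].
have -> : (fun y => \sum_(i <- t :: s) F i y) = (fun y => F t y + \sum_(i <- s) F i y).
  by apply/funext=> y; rewrite big_cons.
have H1 := dbD (hF t) IH1.
have H2 := d1D (hF t) IH1.

rewrite big_cons; split.
 exact H1.
by rewrite H2 IH2.
Qed.

Implicit Types F G : C -> C.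
Lemma DnS k F : Dn k.+1 F = derive1 (Dn k F).
Proof. by []. Qed.

Lemma Dn_shift k F y : Dn k (fun w => F (y + w)) = fun z => Dn k F (y + z).
Proof.
elim: k => [//|k IH]; apply/funext=> z; rewrite DnS IH; exact: derive1_shift.
Qed.

Lemma Dn0f k : Dn k (fun _ : C => (0 : C)) = fun _ => 0.
Proof. elim: k => [//|k IH]; apply/funext=> z; rewrite DnS IH; exact: d1cst. Qed.

Lemma DnD j k F : Dn j (Dn k F) = Dn (j + k) F.
Proof. by rewrite /Dn /derive1n iterD. Qed.

Lemma smooth_shift F y : smooth F -> smooth (fun w => F (y + w)).
Proof. move=> hF k x; rewrite Dn_shift; apply: derivable_shift; exact: hF. Qed.

Lemma Dn_sum (I : Type) (s : seq I) (G : I -> C -> C) k :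
  (forall i, smooth (G i)) ->
  Dn k (fun z => \sum_(i <- s) G i z) = fun z => \sum_(i <- s) Dn k (G i) z.
Proof.
move=> hG; elim: k => [//|k IH]; apply/funext=> z; rewrite DnS IH.
have [_ ->] := d1sum s (fun i => hG i k z).
by [].
Qed.

Lemma smooth_sum (I : Type) (s : seq I) (G : I -> C -> C) :
  (forall i, smooth (G i)) -> smooth (fun z => \sum_(i <- s) G i z).
Proof.
move=> hG k z; rewrite Dn_sum //.
by have [H _] := d1sum s (fun i => hG i k z).
Qed.

Lemma Dn_scal (b : C) G k : smooth G -> Dn k (fun z => b * G z) = fun z => b * Dn k G z.
Proof.
move=> hG; elim: k => [//|k IH]; apply/funext=> z; rewrite DnS IH.
exact: (d1Z b (hG k z)).
Qed.

Lemma smooth_scal (b : C) G : smooth G -> smooth (fun z => b * G z).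
Proof. move=> hG k z; rewrite Dn_scal //; exact: (dbZ (k:=b) (hG k z)). Qed.

Lemma Dn_mulz G k : smooth G ->
  Dn k (fun z => z * G z) = fun z => z * Dn k G z + k%:R * Dn k.-1 G z.
Proof.
move=> hG; elim: k => [|k IH].
  by apply/funext=> z; rewrite mul0r addr0.
apply/funext=> z; rewrite DnS IH.
rewrite (d1D (dbM (dbid (x:=z)) (hG k z)) (dbZ (k:=k%:R) (hG k.-1 z))).
rewrite (d1M (dbid (x:=z)) (hG k z)) d1id (d1Z k%:R (hG k.-1 z)) -DnS.
clear IH; case: k => [|k] /=.
  by rewrite mul0r addr0 mulr1 mul1r.
by rewrite [X in _ = _ + X * _]mulrS mulrDl mul1r mulr1 addrA.
Qed.

Lemma smooth_mulz G : smooth G -> smooth (fun z => z * G z).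
Proof.
move=> hG k z; rewrite Dn_mulz //.
exact: (dbD (dbM (dbid (x:=z)) (hG k z)) (dbZ (k:=k%:R) (hG k.-1 z))).
Qed.
End S.


Lemma alg_H (T : comRingType) (a X S D P y l J : T) :
  (l + y) * D = X - S - J * P -> a * X - a * S - y * (a * D) = a * J * P + a * l * D.
Proof.
move=> H; have -> : X = (l + y) * D + S + J * P by rewrite H; ring.
ring.
Qed.

Lemma alg_step (T : comRingType) (A S tD D J jD : T) :
  A - S - (tD + D * 1) - J * jD = 0 -> J * jD = J * D ->
  A - S - tD - (J + 1) * D = 0.
Proof. move=> H E; rewrite -H E; ring. Qed.

Lemma alg_sol (T : comRingType) (X S tD JP : T) :
  X - S - tD - JP = 0 -> tD = X - S - JP.
Proof. move=> H; apply/eqP; rewrite -subr_eq0; apply/eqP; rewrite -[RHS]oppr0 -H; ring. Qed.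

Lemma alg2 (T : comRingType) (a j P l D X : T) :
  a * j * P + (a * l * D + X) = a * (l * D + j * P) + X.
Proof. ring. Qed.

Section S.
Variable R : realType.
Local Notation C := (Cx R).
Implicit Types F G : C -> C.

Lemma kerL0_H r (a : nat -> C) f : kerL0 r a f -> forall j t,
  t * Dn j f t = Dn (j + r) f t - \sum_(1 <= m < r.-1) a m * Dn (j + m) f t
                 - j%:R * Dn j.-1 f t.
Proof.
move=> [hf hL] j.
suff H : forall t, Dn (j + r) f t - \sum_(1 <= m < r.-1) a m * Dn (j + m) f t
                 - t * Dn j f t - j%:R * Dn j.-1 f t = 0.
  by move=> t; apply: alg_sol; exact: H.
elim: j => [|j IH] t.
  by rewrite mul0r subr0 add0n; have := hL t; rewrite /L0.
have E : (fun t => Dn (j + r) f t - \sum_(1 <= m < r.-1) a m * Dn (j + m) f t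
                 - t * Dn j f t - j%:R * Dn j.-1 f t) = fun _ => 0.
  by apply/funext=> s; exact: IH.
have := d1cst (0 : C) t; rewrite -E.
have hS := d1sum (index_iota 1 r.-1) (F := fun m t => a m * Dn (j + m) f t)
   (x := t) (fun m => dbZ (k := a m) (hf (j + m)%N t)).
have hM := dbM (dbid (x := t)) (hf j t).
have hN := dbZ (k := j%:R) (hf j.-1 t).
rewrite (d1B (dbB (dbB (hf (j + r)%N t) hS.1) hM) hN).
rewrite (d1B (dbB (hf (j + r)%N t) hS.1) hM).
rewrite (d1B (hf (j + r)%N t) hS.1).
rewrite hS.2 (d1M (dbid (x := t)) (hf j t)) d1id (d1Z j%:R (hf j.-1 t)).
rewrite -!DnS addSn.
under eq_bigr do rewrite (d1Z _ (hf _ t)) -DnS -addSn.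
move=> H; rewrite -natr1 /=; apply: (alg_step H).
by clear IH E hS hM hN H; case: j => [|j]; rewrite ?mul0r.
Qed.


Definition muldk (k : nat) (e : distr R) : distr R :=
  map (fun t => (t.1.1, t.1.2, (t.2 + k)%N)) e.
Definition scale (b : C) (e : distr R) : distr R :=
  map (fun t => (b * t.1.1, t.1.2, t.2)) e.
Fixpoint mulz (e : distr R) : distr R :=
  match e with
  | [::] => [::]
  | t :: e' => (t.1.1 * t.2%:R, t.1.2, t.2.-1) :: (t.1.1 * t.1.2, t.1.2, t.2) :: mulz e'
  end.
Definition mulzmu (mu : C) (e : distr R) : distr R := mulz e ++ scale (- mu) e.

Lemma dapp_nil G : dapp [::] G = 0.
Proof. by rewrite /dapp big_nil. Qed.
Lemma dapp_cons t e G : dapp (t :: e) G = t.1.1 * Dn t.2 G t.1.2 + dapp e G.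
Proof. by rewrite /dapp big_cons. Qed.
Lemma dapp_cat e1 e2 G : dapp (e1 ++ e2) G = dapp e1 G + dapp e2 G.
Proof. by rewrite /dapp big_cat. Qed.
Lemma dapp_scale b e G : dapp (scale b e) G = b * dapp e G.
Proof.
rewrite /dapp big_map big_distrr; apply: eq_bigr => t _ /=; by rewrite mulrA.
Qed.
Lemma dapp_muldk k e G : dapp (muldk k e) G = dapp e (Dn k G).
Proof. rewrite /dapp big_map; apply: eq_bigr => t _ /=; by rewrite DnD. Qed.

Lemma dapp_mulz e G : smooth G -> dapp (mulz e) G = dapp e (fun z => z * G z).
Proof.
move=> hG; elim: e => [|t e IH] /=; first by rewrite !dapp_nil.
rewrite !dapp_cons IH Dn_mulz //=; exact: alg2.
Qed.

Lemma dapp_lin (I : Type) (s : seq I) (H : I -> C -> C) e :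
  (forall i, smooth (H i)) ->
  dapp e (fun z => \sum_(i <- s) H i z) = \sum_(i <- s) dapp e (H i).
Proof.
move=> hH; rewrite /dapp [RHS]exchange_big /=; apply: eq_bigr => t _.
by rewrite Dn_sum // big_distrr.
Qed.

Lemma dapp_scalf b G e : smooth G -> dapp e (fun z => b * G z) = b * dapp e G.
Proof.
move=> hG; rewrite /dapp big_distrr; apply: eq_bigr => t _ /=.
by rewrite Dn_scal // mulrCA.
Qed.

Lemma smooth_zpow j G : smooth G -> smooth (fun z => z ^+ j * G z).
Proof.
elim: j G => [|j IH] G hG.
  have -> : (fun z : C => z ^+ 0 * G z) = G by apply/funext=> z; rewrite mul1r.
  done.
have -> : (fun z : C => z ^+ j.+1 * G z) = (fun z => z * (z ^+ j * G z)).
  by apply/funext=> z; rewrite exprS mulrA.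
by apply: smooth_mulz; apply: IH.
Qed.

Lemma dapp_zpow j G e : smooth G ->
  dapp e (fun z => z ^+ j * G z) = dapp (iter j mulz e) G.
Proof.
elim: j G => [|j IH] G hG /=.
  have -> : (fun z : C => z ^+ 0 * G z) = G by apply/funext=> z; rewrite mul1r.
  done.
rewrite (dapp_mulz _ hG).
have -> : (fun z : C => z ^+ j.+1 * G z) = (fun z => z ^+ j * (z * G z)).
  by apply/funext=> z; rewrite exprS mulrCA mulrA.
by rewrite (IH _ (smooth_mulz hG)).
Qed.

Lemma smooth_Dn k G : smooth G -> smooth (Dn k G).
Proof. by move=> hG m z; rewrite DnD; apply: hG. Qed.

Definition Dcomb (p : seq {poly C}) (c : distr R) : distr R :=
  \big[cat/[::]]_(k < size p) \big[cat/[::]]_(j < size p`_k)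
     scale (p`_k)`_j (muldk k (iter j mulz c)).

Lemma dapp_bigcat (I : Type) (s : seq I) (E : I -> distr R) G :
  dapp (\big[cat/[::]]_(i <- s) E i) G = \sum_(i <- s) dapp (E i) G.
Proof.
exact: (big_morph (fun e => dapp e G) (fun e1 e2 => dapp_cat e1 e2 G) (dapp_nil G)).
Qed.

Lemma dapp_Dcomb p c G :
  dapp (Dcomb p c) G = \sum_(k < size p) \sum_(j < size p`_k)
     (p`_k)`_j * dapp (iter j mulz c) (Dn k G).
Proof.
rewrite /Dcomb dapp_bigcat; apply: eq_bigr => k _.
rewrite dapp_bigcat; apply: eq_bigr => j _.
by rewrite dapp_scale dapp_muldk.
Qed.

Lemma Key1 p c u : smooth u -> dapp c (polyop p u) = dapp (Dcomb p c) u.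
Proof.
move=> hu; rewrite dapp_Dcomb.
have -> : polyop p u = fun z => \sum_(k < size p) \sum_(j < size p`_k)
     (p`_k)`_j * (z ^+ j * Dn k u z).
  apply/funext=> z; rewrite /polyop; apply: eq_bigr => k _.
  by rewrite horner_coef big_distrl; apply: eq_bigr => j _; rewrite mulrA.
have sm : forall k j b, smooth (fun z : C => b * (z ^+ j * Dn k u z)).
  by move=> k j b; apply: smooth_scal; apply: smooth_zpow; apply: smooth_Dn.
rewrite dapp_lin; last by move=> k; apply: smooth_sum => j; exact: sm.
apply: eq_bigr => k _; rewrite dapp_lin; last by move=> j; exact: sm.
apply: eq_bigr => j _; rewrite dapp_scalf; last exact: (smooth_zpow (smooth_Dn hu)).
by rewrite dapp_zpow; last exact: (smooth_Dn hu).
Qed.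


End S.


Section S.
Variable R : realType.
Local Notation C := (Cx R).
Implicit Types F G : C -> C.

Lemma EvS (e : distr R) f y :
  dapp e (hat f y) = \sum_(t <- e) t.1.1 * Dn t.2 f (t.1.2 + y).
Proof.
rewrite /dapp; apply: eq_bigr => t _; rewrite /hat Dn_shift addrC //.
Qed.

Lemma EvSk k (e : distr R) f y :
  dapp (muldk k e) (hat f y) = \sum_(t <- e) t.1.1 * Dn (t.2 + k) f (t.1.2 + y).
Proof. by rewrite EvS /muldk big_map. Qed.

Lemma DnEvS k (e : distr R) f : smooth f ->
  Dn k (fun y => \sum_(t <- e) t.1.1 * Dn t.2 f (t.1.2 + y)) =
  fun y => \sum_(t <- e) t.1.1 * Dn (t.2 + k) f (t.1.2 + y).
Proof.
move=> hf.
rewrite (@Dn_sum _ _ e (fun t y => t.1.1 * Dn t.2 f (t.1.2 + y))); last first.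
  by move=> t; apply: smooth_scal; apply: smooth_shift; apply: smooth_Dn.
apply/funext=> y; apply: eq_bigr => t _.
rewrite Dn_scal; last by apply: smooth_shift; apply: smooth_Dn.
by rewrite Dn_shift DnD addnC.
Qed.

Lemma EvD k (e : distr R) f : smooth f ->
  Dn k (fun y => dapp e (hat f y)) = fun y => dapp (muldk k e) (hat f y).
Proof.
move=> hf.
have -> : (fun y => dapp e (hat f y)) =
          fun y => \sum_(t <- e) t.1.1 * Dn t.2 f (t.1.2 + y).
  by apply/funext=> y; rewrite EvS.
rewrite DnEvS //; apply/funext=> y; by rewrite EvSk.
Qed.

Lemma mulzS (e : distr R) f y :
  dapp (mulz e) (hat f y) = \sum_(t <- e)
    (t.1.1 * t.2%:R * Dn t.2.-1 f (t.1.2 + y) + t.1.1 * t.1.2 * Dn t.2 f (t.1.2 + y)).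
Proof.
rewrite EvS; elim: e => [|t e IH] /=; first by rewrite !big_nil.
by rewrite !big_cons IH addrA.
Qed.

Lemma L3 r (a : nat -> C) (e : distr R) f y : kerL0 r a f ->
  L0 r a (fun y => dapp e (hat f y)) y = dapp (mulz e) (hat f y).
Proof.
move=> hk; have hf := hk.1; have HH := kerL0_H hk.
rewrite /L0 (EvD _ _ hf).
under eq_bigr do rewrite (EvD _ _ hf) EvSk big_distrr.
rewrite mulzS !EvSk EvS.
rewrite exchange_big big_distrr /= -!sumrB.
apply: eq_bigr => t _.
have -> : \sum_(1 <= i < r.-1) a i * (t.1.1 * Dn (t.2 + i) f (t.1.2 + y)) =
          t.1.1 * \sum_(1 <= i < r.-1) a i * Dn (t.2 + i) f (t.1.2 + y).
  by rewrite big_distrr; apply: eq_bigr => i _; rewrite mulrCA.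
apply: alg_H; exact: HH.
Qed.

Lemma iterL0 r (a : nat -> C) f j (e : distr R) : kerL0 r a f ->
  iter j (L0 r a) (fun y => dapp e (hat f y)) = fun y => dapp (iter j (@mulz R) e) (hat f y).
Proof.
move=> hk; elim: j => [//|j IH]; rewrite iterS IH; apply/funext=> y.
by rewrite L3.
Qed.

Lemma Key2 r (a : nat -> C) p (c : distr R) f y : kerL0 r a f ->
  flatop r a p (dact c (hat f)) y = dapp (Dcomb p c) (hat f y).
Proof.
move=> hk; rewrite /flatop dapp_Dcomb; apply: eq_bigr => k _.
have -> : (fun y => \sum_(j < size p`_k) p`_k`_j * iter j (L0 r a) (dact c (hat f)) y) =
   fun y => dapp (\big[cat/[::]]_(j < size p`_k) scale p`_k`_j (iter j (@mulz R) c)) (hat f y).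
  apply/funext=> z; rewrite dapp_bigcat; apply: eq_bigr => j _.
  by rewrite dapp_scale /dact (iterL0 _ _ hk).
rewrite (EvD _ _ hk.1) dapp_muldk dapp_bigcat; apply: eq_bigr => j _.
by rewrite dapp_scale.
Qed.

Definition Pk r (a : nat -> C) (e : distr R) :=
  forall f, kerL0 r a f -> forall y, dapp e (hat f y) = 0.

Lemma P_mulzmu r (a : nat -> C) mu e : Pk r a e -> Pk r a (mulzmu mu e).
Proof.
move=> hP f hk y; rewrite /mulzmu dapp_cat dapp_scale hP // mulr0 addr0.
rewrite -(L3 _ _ hk).
have -> : (fun y => dapp e (hat f y)) = fun _ => 0 by apply/funext=> z; exact: hP.
rewrite /L0 Dn0f big1 ?mulr0 ?subr0 //.
by move=> i _; rewrite Dn0f mulr0.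
Qed.

End S.


Section S.
Variable R : realType.
Local Notation C := (Cx R).

Fixpoint coef (e : distr R) (l : C) (i : nat) : C :=
  match e with
  | [::] => 0
  | t :: e' => (if (t.1.2 == l) && (t.2 == i) then t.1.1 else 0) + coef e' l i
  end.

Lemma coef_cat e1 e2 l i : coef (e1 ++ e2) l i = coef e1 l i + coef e2 l i.
Proof. by elim: e1 => [|t e IH] /=; rewrite ?add0r // IH addrA. Qed.

Lemma coef_scale b e l i : coef (scale b e) l i = b * coef e l i.
Proof.
elim: e => [|t e IH] /=; first by rewrite mulr0.
rewrite IH mulrDr; congr (_ + _); by case: ifP; rewrite ?mulr0.
Qed.

Lemma term_mulz (a lam l : C) (j i : nat) :
  (if (lam == l) && (j.-1 == i) then a * j%:R else 0) +
  (if (lam == l) && (j == i) then a * lam else 0) =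
  l * (if (lam == l) && (j == i) then a else 0) +
  i.+1%:R * (if (lam == l) && (j == i.+1) then a else 0).
Proof.
have [->|ne] := eqVneq lam l; last by rewrite /= !mulr0 addr0.
rewrite /=; case: j => [|j] /=.
  case: i => [|i] /=; first by rewrite mulr0 add0r mulr0 addr0 mulrC.
  by rewrite !mulr0 addr0.
have [->|ne] := eqVneq j i.
  rewrite !eqxx /=.
  have -> : (i.+1 == i) = false by elim: i.
  by rewrite /= mulr0 addr0 add0r mulrC.
have -> : (j.+1 == i.+1) = false by rewrite eqSS; apply/negbTE.
rewrite /= mulr0 add0r addr0.
by case: ifP => _; rewrite ?mulr0 // mulrC.
Qed.

Lemma coef_mulz e l i : coef (mulz e) l i = l * coef e l i + i.+1%:R * coef e l i.+1.
Proof.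
elim: e => [|t e IH] /=; first by rewrite !mulr0 addr0.
by rewrite IH addrA term_mulz !mulrDr addrACA.
Qed.

Lemma coef_mulzmu mu e l i :
  coef (mulzmu mu e) l i = (l - mu) * coef e l i + i.+1%:R * coef e l i.+1.
Proof. rewrite /mulzmu coef_cat coef_mulz coef_scale; ring. Qed.

Lemma coef_iter mu m e i :
  coef (iter m (mulzmu mu) e) mu i = (\prod_(k < m) (i + k.+1)%:R) * coef e mu (i + m).
Proof.
elim: m i => [|m IH] i /=; first by rewrite big_ord0 mul1r addn0.
rewrite coef_mulzmu subrr mul0r add0r IH big_ord_recl /= addn1 mulrA.
congr (_ * _ * _).
  by apply: eq_bigr => k _; rewrite /bump /= add1n addSnnS.
by rewrite addSnnS.
Qed.

End S.


Section S.
Variable R : realType.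
Local Notation C := (Cx R).

Definition bnd (e : distr R) : nat := foldr (fun t m => maxn t.2.+1 m) 0%N e.

Lemma coef_bound (e : distr R) l i : (bnd e <= i)%N -> coef e l i = 0.
Proof.
elim: e => [//|t e IH] /=; rewrite geq_max => /andP[h1 h2].
rewrite IH // addr0; case: ifP => // /andP[_ /eqP ei].
by move: h1; rewrite ei ltnn.
Qed.

Lemma coef_pts (e : distr R) l i : l \notin [seq t.1.2 | t <- e] -> coef e l i = 0.
Proof.
elim: e => [//|t e IH] /=; rewrite in_cons negb_or => /andP[h1 h2].
rewrite IH // addr0; case: ifP => // /andP[/eqP el _].
by move: h1; rewrite el eqxx.
Qed.

Definition keys (e : distr R) := [seq (t.1.2, t.2) | t <- e].

Lemma dapp_repr (e : distr R) u (s : seq (C * nat)) : uniq s ->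
  {subset keys e <= s} ->
  dapp e u = \sum_(k <- s) coef e k.1 k.2 * Dn k.2 u k.1.
Proof.
move=> us; elim: e => [|t e IH] hsub.
  by rewrite dapp_nil big1 // => k _; rewrite mul0r.
rewrite dapp_cons IH; last by move=> k hk; apply: hsub; rewrite /= in_cons hk orbT.
rewrite /=; under [X in _ = X]eq_bigr do rewrite mulrDl.
rewrite big_split /=; congr (_ + _).
have ht : (t.1.2, t.2) \in s by apply: hsub; rewrite /= in_cons eqxx.
rewrite (bigD1_seq _ ht us) /= !eqxx /= big1 ?addr0 // => k hk.
case: ifP => [/andP[/eqP e1 /eqP e2]|_]; last by rewrite mul0r.
by move: hk; rewrite e1 e2 -surjective_pairing eqxx.
Qed.

Lemma dapp_single (e : distr R) u l0 :
  (forall l i, (l, i) != (l0, 0%N) -> coef e l i = 0) ->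
  dapp e u = coef e l0 0 * u l0.
Proof.
move=> h.
rewrite (@dapp_repr e u (undup ((l0, 0%N) :: keys e))); last 2 first.
- exact: undup_uniq.
- by move=> k hk; rewrite mem_undup in_cons hk orbT.
have hin : (l0, 0%N) \in undup ((l0, 0%N) :: keys e) by rewrite mem_undup in_cons eqxx.
rewrite (bigD1_seq _ hin (undup_uniq _)) /= big1 ?addr0 // => k hk.
by rewrite h ?mul0r // -surjective_pairing.
Qed.

Lemma iter_inv (Q : distr R -> Prop) mu m (e : distr R) :
  (forall e, Q e -> Q (mulzmu mu e)) -> Q e -> Q (iter m (mulzmu mu) e).
Proof. by move=> hQ; elim: m => [//|m IH] /= /IH; apply: hQ. Qed.

Variables (r : nat) (a : nat -> C) (f0 : C -> C) (x0 : C).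
Hypotheses (Hf0 : kerL0 r a f0) (Hnz : f0 x0 != 0).

Lemma base (e : distr R) l0 : Pk r a e ->
  (forall l i, (l, i) != (l0, 0%N) -> coef e l i = 0) -> coef e l0 0 != 0 -> False.
Proof.
move=> hP h hc; have := hP f0 Hf0 (x0 - l0).
rewrite (dapp_single _ h) /hat /= subrK => /eqP; rewrite mulf_eq0.
by rewrite (negbTE hc) (negbTE Hnz).
Qed.

Lemma kill J l0 (s : seq C) : forall e : distr R, Pk r a e ->
  (forall l i, (J <= i)%N -> coef e l i = 0) ->
  (forall l, l != l0 -> l \notin s -> forall i, coef e l i = 0) ->
  coef e l0 0 != 0 -> (forall i, coef e l0 i.+1 = 0) -> False.
Proof.
elim: s => [|mu s IH] e hP hb hd hc0 hc1.
  apply: (base hP _ hc0) => l i hne.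
  have [el|nl] := eqVneq l l0; last by apply: hd.
  move: hne; rewrite el; case: i => [|i]; first by rewrite eqxx.
  by move=> _; apply: hc1.
have [em|nm] := eqVneq mu l0.
  apply: (IH e hP hb _ hc0 hc1) => l nl ns; apply: hd => //.
  by rewrite in_cons negb_or ns andbT em.
pose e' := iter J (mulzmu mu) e.
have hbi : forall l, (forall i, (J <= i)%N -> coef e l i = 0) ->
    forall i, (J <= i)%N -> coef e' l i = 0.
  move=> l hl; apply: (iter_inv (Q := fun e => forall i, (J <= i)%N -> coef e l i = 0)) => //.
  move=> e1 h1 i hi; rewrite coef_mulzmu !h1 ?mulr0 ?addr0 //.
  exact: leq_trans hi _.
have [hc0' hc1'] : coef e' l0 0 != 0 /\ forall i, coef e' l0 i.+1 = 0.
  apply: (iter_inv (Q := fun e => coef e l0 0 != 0 /\ forall i, coef e l0 i.+1 = 0)).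
    move=> e1 [h1 h2]; rewrite !coef_mulzmu h2 mulr0 addr0; split.
      by rewrite mulf_neq0 // subr_eq0 eq_sym.
    by move=> i; rewrite coef_mulzmu !h2 !mulr0 addr0.
  by split.
apply: (IH e').
- by apply: (iter_inv (Q := Pk r a)) => // e1; apply: P_mulzmu.
- by move=> l i hi; apply: hbi => // k hk; apply: hb.
- move=> l nl ns i.
  have [lm|lnm] := eqVneq l mu.
    by rewrite lm coef_iter hb ?mulr0 // leq_addl.
  apply: (iter_inv (Q := fun e => forall i, coef e l i = 0)) => //.
    by move=> e1 h1 j; rewrite coef_mulzmu !h1 !mulr0 addr0.
  by apply: hd => //; rewrite in_cons negb_or lnm.
- exact: hc0'.
- exact: hc1'.
Qed.

Lemma Pk_zero (e : distr R) : Pk r a e -> forall u, dapp e u = 0.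
Proof.
move=> hP u.
have [[l0 [i0 h0]]|hall] := pselect (exists l i, coef e l i != 0); last first.
  rewrite (@dapp_repr e u (undup (keys e))); last 2 first.
  - exact: undup_uniq.
  - by move=> k hk; rewrite mem_undup.
  rewrite big1 // => k _.
  have -> : coef e k.1 k.2 = 0.
    by apply/eqP; apply/negP => /negP hk; apply: hall; exists k.1, k.2.
  by rewrite mul0r.
pose J := bnd e.
have ub : forall i, coef e l0 i != 0 -> (i <= J)%N.
  move=> i hi; rewrite leqNgt; apply/negP => hJ; move: hi.
  by rewrite coef_bound ?eqxx // ltnW.
have exP : exists i, coef e l0 i != 0 by exists i0.
case: (ex_maxnP exP ub) => j0 hj0 maxj0.
pose e1 := iter j0 (mulzmu l0) e.
exfalso; apply: (@kill J l0 [seq t.1.2 | t <- e] e1).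
- by apply: (iter_inv (Q := Pk r a)) => // e2; apply: P_mulzmu.
- move=> l i hi; apply: (iter_inv (Q := fun e => forall i, (J <= i)%N -> coef e l i = 0)) => //.
    move=> e2 h2 k hk; rewrite coef_mulzmu !h2 ?mulr0 ?addr0 //.
    exact: leq_trans hk _.
  by move=> k hk; apply: coef_bound.
- move=> l nl ns i.
  apply: (iter_inv (Q := fun e => forall i, coef e l i = 0)) => //.
    by move=> e2 h2 j; rewrite coef_mulzmu !h2 !mulr0 addr0.
  by move=> k; apply: coef_pts.
- rewrite coef_iter add0n mulf_neq0 //.
  rewrite prodf_seq_neq0; apply/allP => k _ /=; by rewrite pnatr_eq0.
- move=> i; rewrite coef_iter.
  have -> : coef e l0 (i.+1 + j0) = 0.
    apply/eqP; apply/negP => hne; move/negP: hne => hne.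
    by have := maxj0 _ hne; rewrite addSn ltnNge leq_addl.
  by rewrite mulr0.
Qed.

End S.

Unset Implicit Arguments.
Set Strict Implicit.

Theorem mainTheorem8 (R : realType) (r : nat) (a : nat -> Cx R)
  (f : nat -> Cx R -> Cx R) (n : nat) (lam gam : nat -> Cx R)
  (kappa : Cx R) (p : seq {poly Cx R}) :
  (1 < r)%N ->
  (* f_0, ..., f_{r-1} is a basis of ker L_0 with Wronskian determinant 1 *)
  (forall j, (j < r)%N -> kerL0 r a (f j)) ->
  (forall g, kerL0 r a g ->
     exists b : nat -> Cx R, forall x, g x = \sum_(j < r) b j * f j x) ->
  (forall x, \det (wr_mx r f x) = 1) ->
  (* C in D : basis delta_{lam_i} o (d_z + gam_i), i < n, lam_i distinct *)
  (0 < n)%N ->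
  (forall i j, (i < n)%N -> (j < n)%N -> lam i = lam j -> i = j) ->
  (* Kbar_C = sum_k p_k(x) d^k = kappa |Wr(phi_1..phi_N, .)|, monic, N = r n *)
  kappa != 0 ->
  size p = (r * n).+1 ->
  p`_(r * n) \is monic ->
  (forall u, smooth u -> forall x,
     polyop p u x = kappa * \det (wr_mx_ext (r * n) (phi r lam gam f) u x)) ->
  forall c : distr R,
    inCbeta r a p c <-> (forall u, smooth u -> dapp c (polyop p u) = 0).
Proof.
move=> hr hker _ hdet _ _ _ _ _ _ c.
have hf0 : kerL0 r a (f 0%N) by apply: hker; exact: (ltn_trans (ltn0Sn 0) hr).
have [[x0 hx0]|hn] := pselect (exists x0, f 0%N x0 != 0); last first.
  exfalso.
  have hz : f 0%N = fun _ => 0.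
    apply/funext=> x; case: (eqVneq (f 0%N x) 0) => // h.
    by exfalso; apply: hn; exists x.
  move: hdet hr; case: r {hker hf0} => [//|r'] hdet _.
  have := hdet 0; rewrite (expand_det_col _ ord0) big1 => [|i _]; last first.
    by rewrite /wr_mx mxE /= hz Dn0f mul0r.
  by move/eqP; rewrite eq_sym oner_eq0.
split.
- move=> HL u hu; rewrite Key1 //; apply: (Pk_zero hf0 hx0) => g hg y.
  rewrite -(Key2 p c y hg); exact: HL.
- move=> HR g hg x; have hs : smooth (hat g x) by exact: (smooth_shift hg.1).
  by rewrite (Key2 p c x hg) -(Key1 p c hs); apply: HR.
Qed.
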